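(* Let $n \geq 3$, let $V_k$ denote the volume of the unit $k$-sphere in $\mathbb{R}^{k+1}$, and let $$K_n = \frac{\left(P_{n-3}(1)+\left(1-\frac{1}{3^{n-2}}\right)\left(P_{n-2}(1)+\log\left(\frac{3}{4}\right)\right)\right)2^{n-2}V_{n-2}V_{n-3}\Gamma(\frac{n}{2})^2}{(n-2)^2V_{n-1}\Gamma(n)}.$$ Then $$K_n \geq \left(\frac{2\pi e}{n-1}\right)^{\frac{n-1}{2}}\left(\frac{3\left(P_{n-3}(1)+\left(1-\frac{1}{3^{n-2}}\right)\left(P_{n-2}(1)+\log\left(\frac{3}{4}\right)\right)\right)}{2^{\frac{3}{2}}e^{\frac52}(n-2)} \right).$$
   Context: For $k \geq 1$, $P_k(1) = 1+\frac12+\cdots+\frac1k$ (the $k$-th harmonic number), and $P_0(1)=0$. *)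

(* Defs.v *)
From Stdlib Require Import Reals.
From Coquelicot Require Import Coquelicot.
Open Scope R_scope.

Definition Gamma (s : R) : R :=
  RInt_gen (fun t => Rpower t (s - 1) * exp (- t)) (at_right 0) (Rbar_locally p_infty).

Fixpoint P1 (k : nat) : R :=
  match k with
  | O => 0
  | S j => P1 j + / INR (S j)
  end.

(* V_k: volume (surface area) of the unit k-sphere in R^(k+1),
   V_k = 2 pi^((k+1)/2) / Gamma((k+1)/2). *)
Definition Vsph (k : nat) : R :=
  2 * Rpower PI (INR (k + 1) / 2) / Gamma (INR (k + 1) / 2).

Definition Qn (n : nat) : R :=
  P1 (n - 3) + (1 - / 3 ^ (n - 2)) * (P1 (n - 2) + ln (3 / 4)).

Definition Kn (n : nat) : R :=
  Qn n * 2 ^ (n - 2) * Vsph (n - 2) * Vsph (n - 3) * (Gamma (INR n / 2)) ^ 2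
  / ((INR n - 2) ^ 2 * Vsph (n - 1) * Gamma (INR n)).

(* Main.v *)
Require Import Defs.
From Stdlib Require Import Reals Lra Lia Factorial.
From Coquelicot Require Import Coquelicot.
Open Scope R_scope.

Lemma PI_ub : PI <= 3.1416.
Proof.
  destruct (PI_2_3_7_ineq 2) as [_ H].
  unfold tg_alt, PI_2_3_7_tg, Ratan_seq in H. simpl in H.
  lra.
Qed.

Lemma e_lb : 2.718 <= exp 1.
Proof.
  assert (H := exp_ge_taylor 1 6 ltac:(lra)).
  simpl in H. lra.
Qed.

Lemma ln_lb : forall x, 0 < x -> 2 * x / (2 + x) <= ln (1 + x).
Proof.
  intros x Hx.
  set (phi := fun y => ln (1 + y) - 2 * y / (2 + y)).
  destruct (MVT_cor2 phi (fun y => / (1 + y) - 4 / ((2 + y) * (2 + y))) 0 x Hx) as [c [Hc Hc2]].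
  - intros c Hc. unfold phi. apply is_derive_Reals. auto_derive.
    + repeat split; lra.
    + field. lra.
  - unfold phi in Hc. rewrite Rplus_0_r, ln_1 in Hc.
    assert (0 <= / (1 + c) - 4 / ((2 + c) * (2 + c))).
    { replace (/ (1 + c) - 4 / ((2 + c) * (2 + c))) with (c * c / ((1 + c) * ((2 + c) * (2 + c)))) by (field; lra).
      apply Rle_mult_inv_pos. nra. apply Rmult_lt_0_compat; nra. }
    assert (0 <= (/ (1 + c) - 4 / ((2 + c) * (2 + c))) * (x - 0)) by nra.
    replace (2 * 0 / (2 + 0)) with 0 in Hc by field. lra.
Qed.

Lemma exp2_le_pow : forall y (N : nat), 0 < y -> 2 * y + 1 <= INR N -> exp 1 ^ 2 <= (1 + / y) ^ N.
Proof.
  intros y N Hy HN.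
  assert (Hx : 0 < / y) by (apply Rinv_0_lt_compat; auto).
  assert (H1 := ln_lb (/ y) Hx).
  assert (E1 : 2 * / y / (2 + / y) = 2 / (2 * y + 1)) by (field; lra).
  rewrite E1 in H1.
  assert (H2 : 0 < 2 / (2 * y + 1)) by (apply Rdiv_lt_0_compat; lra).
  rewrite <- (exp_ln ((1 + / y) ^ N)) by (apply pow_lt; lra).
  rewrite ln_pow by lra.
  replace (exp 1 ^ 2) with (exp 2) by (simpl; rewrite Rmult_1_r, <- exp_plus; f_equal; ring).
  assert (H3 : 2 <= INR N * ln (1 + / y)).
  { apply Rle_trans with ((2 * y + 1) * (2 / (2 * y + 1))).
    - right. field. lra.
    - apply Rmult_le_compat; lra. }
  destruct H3 as [H3|H3]; [left; apply exp_increasing; auto| rewrite H3; lra].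
Qed.

Lemma pow_ratio : forall k (N : nat), 0 < k -> (1 + / k) ^ N * k ^ N = (k + 1) ^ N.
Proof. intros. rewrite <- Rpow_mult_distr. f_equal. field. lra. Qed.

Lemma B3 : forall j : nat, let k := INR (S j) in
  INR (fact (S j)) ^ 2 * exp 1 ^ (2 * S j) <= exp 1 ^ 2 * k ^ (2 * S j + 1).
Proof.
  induction j; intros k; unfold k in *.
  - simpl. lra.
  - set (kk := INR (S j)) in *.
    assert (Hk : 0 < kk) by (unfold kk; apply lt_0_INR; lia).
    assert (E : INR (S (S j)) = kk + 1) by (unfold kk; rewrite (S_INR (S j)); auto).
    rewrite E.
    rewrite fact_simpl, mult_INR, E.
    replace (exp 1 ^ (2 * S (S j))) with (exp 1 ^ (2 * S j) * exp 1 ^ 2)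
      by (rewrite <- pow_add; f_equal; lia).
    replace ((kk + 1) ^ (2 * S (S j) + 1)) with ((kk + 1) ^ (2 * S j + 1) * (kk + 1) ^ 2)
      by (rewrite <- pow_add; f_equal; lia).
    assert (HL := exp2_le_pow kk (2 * S j + 1) Hk).
    assert (HN : 2 * kk + 1 <= INR (2 * S j + 1)).
    { rewrite plus_INR, mult_INR. unfold kk. simpl (INR 2). simpl (INR 1). lra. }
    specialize (HL HN). rewrite <- (pow_ratio kk _ Hk).
    assert (Hp : 0 < kk ^ (2 * S j + 1)) by (apply pow_lt; auto).
    assert (He := exp_pos 1).
    assert (He2 : 0 < exp 1 ^ 2) by (apply pow_lt; auto).
    set (A := (1 + / kk) ^ (2 * S j + 1)) in *.
    set (F := INR (fact (S j))) in *.
    set (P := kk ^ (2 * S j + 1)) in *.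
    set (E1 := exp 1 ^ (2 * S j)) in *.
    set (E2 := exp 1 ^ 2) in *.
    assert (HE1 : 0 <= E1) by (unfold E1; apply pow_le; lra).
    replace ((kk + 1) * F) with (F * (kk + 1)) by ring.
    rewrite Rpow_mult_distr.
    apply Rle_trans with (E2 * P * (kk + 1) ^ 2 * E2).
    + replace (F ^ 2 * (kk + 1) ^ 2 * (E1 * E2)) with ((F ^ 2 * E1) * ((kk + 1) ^ 2 * E2)) by ring.
      replace (E2 * P * (kk + 1) ^ 2 * E2) with ((E2 * P) * ((kk + 1) ^ 2 * E2)) by ring.
      apply Rmult_le_compat_r; [|exact IHj]. apply Rmult_le_pos; [apply pow2_ge_0| lra].
    + replace (E2 * (A * P * (kk + 1) ^ 2)) with ((A * P) * (kk + 1) ^ 2 * E2) by ring.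
      apply Rmult_le_compat_r; [lra|]. apply Rmult_le_compat_r; [apply pow2_ge_0|].
      apply Rmult_le_compat_r; lra.
Qed.

Lemma B4 : forall j : nat, let kk := INR (S j) in
  exp 1 * kk ^ (2 * S j + 1) <= (kk + / 2) ^ (2 * S j + 1).
Proof.
  intros j kk.
  assert (Hk : 0 < kk) by (unfold kk; apply lt_0_INR; lia).
  assert (H2k : 0 < 2 * kk) by lra.
  assert (HL := exp2_le_pow (2 * kk) ((2 * S j + 1) * 2) H2k).
  assert (HN : 2 * (2 * kk) + 1 <= INR ((2 * S j + 1) * 2)).
  { rewrite mult_INR, plus_INR, mult_INR. unfold kk. simpl (INR 2). simpl (INR 1). lra. }
  specialize (HL HN). rewrite pow_mult in HL.
  set (a := (1 + / (2 * kk)) ^ (2 * S j + 1)) in *.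
  assert (Ha : 0 <= a) by (unfold a; apply pow_le; assert (0 < / (2 * kk)) by (apply Rinv_0_lt_compat; lra); lra).
  assert (He := exp_pos 1).
  assert (Hea : exp 1 <= a) by nra.
  replace (kk + / 2) with ((1 + / (2 * kk)) * kk) by (field; lra).
  rewrite Rpow_mult_distr. fold a.
  apply Rmult_le_compat_r; [apply pow_le; lra| exact Hea].
Qed.

Fixpoint hh (k : nat) : R := match k with O => 1 | S j => hh j * (INR j + 1/2) end.

Lemma hh_pos : forall k, 0 < hh k.
Proof. induction k; simpl; [lra|]. apply Rmult_lt_0_compat; auto. assert (H := pos_INR k); lra. Qed.

Lemma B1 : forall j : nat, let k := INR (S j) in INR (fact (S j)) ^ 2 <= 4 * hh (S j) ^ 2 * k.
Proof.
  induction j; intros k; unfold k in *.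
  - simpl. lra.
  - set (kk := INR (S j)) in *.
    assert (Hk : 0 < kk) by (unfold kk; apply lt_0_INR; lia).
    assert (E : INR (S (S j)) = kk + 1) by (unfold kk; rewrite (S_INR (S j)); auto).
    rewrite E, fact_simpl, mult_INR, E.
    change (hh (S (S j))) with (hh (S j) * (INR (S j) + 1/2)). fold kk.
    set (F := INR (fact (S j))) in *. set (h := hh (S j)) in *.
    replace (4 * (h * (kk + 1 / 2)) ^ 2 * (kk + 1)) with ((4 * h ^ 2 * kk) * ((kk + 1/2) ^ 2 * (kk + 1) / kk)) by (field; lra).
    replace (((kk + 1) * F) ^ 2) with (F ^ 2 * (kk + 1) ^ 2) by ring.
    apply Rmult_le_compat; [apply pow2_ge_0 | apply pow2_ge_0 | exact IHj |].
    apply Rmult_le_reg_r with kk; auto.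
    replace ((kk + 1 / 2) ^ 2 * (kk + 1) / kk * kk) with ((kk + 1 / 2) ^ 2 * (kk + 1)) by (field; lra).
    nra.
Qed.

Lemma B2 : forall j : nat, let k := INR (S j) in hh (S j) ^ 2 * (3 * k + 1) <= INR (fact (S j)) ^ 2.
Proof.
  induction j; intros k; unfold k in *.
  - simpl. lra.
  - set (kk := INR (S j)) in *.
    assert (Hk : 0 < kk) by (unfold kk; apply lt_0_INR; lia).
    assert (E : INR (S (S j)) = kk + 1) by (unfold kk; rewrite (S_INR (S j)); auto).
    rewrite E, fact_simpl, mult_INR, E.
    change (hh (S (S j))) with (hh (S j) * (INR (S j) + 1/2)). fold kk.
    set (F := INR (fact (S j))) in *. set (h := hh (S j)) in *.
    replace ((h * (kk + 1 / 2)) ^ 2 * (3 * (kk + 1) + 1)) with ((h ^ 2 * (3 * kk + 1)) * ((kk + 1/2) ^ 2 * (3 * kk + 4) / (3 * kk + 1))) by (field; lra).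
    replace (((kk + 1) * F) ^ 2) with (F ^ 2 * (kk + 1) ^ 2) by ring.
    assert (0 <= h ^ 2 * (3 * kk + 1)) by (apply Rmult_le_pos; [apply pow2_ge_0|lra]).
    apply Rmult_le_compat; [auto | | exact IHj |].
    + apply Rle_mult_inv_pos; [|lra]. apply Rmult_le_pos; [apply pow2_ge_0|lra].
    + apply Rmult_le_reg_r with (3 * kk + 1); [lra|].
      replace ((kk + 1 / 2) ^ 2 * (3 * kk + 4) / (3 * kk + 1) * (3 * kk + 1)) with ((kk + 1 / 2) ^ 2 * (3 * kk + 4)) by (field; lra).
      nra.
Qed.

Lemma cont_of_ex_derive (f:R->R) x : ex_derive f x -> continuous f x.
Proof. intros H. exact (@ex_derive_continuous R_AbsRing R_NormedModule f x H). Qed.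

Definition gf (u : R) := exp (- (u * u)).
Definition Gs (x : R) := RInt gf 0 x.

Lemma gf_cont : forall x, continuous gf x.
Proof. intros x. apply cont_of_ex_derive. unfold gf. auto_derive. auto. Qed.

Lemma gf_exRInt : forall a b, ex_RInt gf a b.
Proof. intros. apply (@ex_RInt_continuous R_CompleteNormedModule). intros; apply gf_cont. Qed.

Lemma Gs_derive : forall x, is_derive Gs x (gf x).
Proof.
  intros x. apply is_derive_RInt with (a := 0).
  - apply filter_forall. intros b. apply RInt_correct, gf_exRInt.
  - apply gf_cont.
Qed.

Definition uf (x t : R) := exp (- (x * x) * (1 + t * t)) / (1 + t * t).
Definition Hf (x : R) := RInt (fun t => uf x t) 0 1.

Lemma opt_pos : forall t, 0 < 1 + t * t.
Proof. intros; nra. Qed.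

Lemma uf_derive : forall x t, is_derive (fun z => uf z t) x (- 2 * x * exp (- (x * x) * (1 + t * t))).
Proof.
  intros x t. unfold uf. auto_derive; [exact I|].
  field. apply Rgt_not_eq, opt_pos.
Qed.

Lemma uf_cont_t : forall x t, continuous (fun t => uf x t) t.
Proof. intros. apply cont_of_ex_derive. unfold uf. auto_derive. apply Rgt_not_eq, opt_pos. Qed.

Lemma Hf_derive : forall x, is_derive Hf x (- 2 * gf x * Gs x).
Proof.
  intros x.
  assert (H := is_derive_RInt_param uf 0 1 x).
  assert (E : RInt (fun t => Derive (fun u => uf u t) x) 0 1 = - 2 * gf x * Gs x).
  { rewrite (RInt_ext _ (fun t => scal (-2 * gf x) (scal x (gf (x * t + 0))))).
    2:{ intros t _. transitivity (- 2 * x * exp (- (x * x) * (1 + t * t))).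
        { apply is_derive_unique, uf_derive. }
        unfold gf, scal; simpl; unfold mult; simpl.
        replace (- (x * x) * (1 + t * t)) with (- (x * x) + - ((x * t + 0) * (x * t + 0))) by ring.
        rewrite exp_plus. ring. }
    rewrite (@RInt_scal R_CompleteNormedModule).
    2:{ apply (@ex_RInt_continuous R_CompleteNormedModule). intros. apply cont_of_ex_derive. unfold gf, scal; simpl; unfold mult; simpl. auto_derive. exact I. }
    rewrite (@RInt_comp_lin R_CompleteNormedModule). 2: apply gf_exRInt.
    unfold Gs, scal; simpl; unfold mult; simpl. rewrite ?Rmult_0_r, ?Rplus_0_r, ?Rmult_1_r.
    ring. }
  rewrite <- E. apply H.
  - apply filter_forall. intros y t _. eexists. apply uf_derive.
  - intros t _. apply continuity_2d_pt_ext with (f := fun u v => - 2 * u * exp (- (u * u) * (1 + v * v))).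
    { intros. symmetry. apply is_derive_unique, uf_derive. }
    apply continuity_2d_pt_mult.
    + apply continuity_2d_pt_mult. apply continuity_2d_pt_const. apply continuity_2d_pt_id1.
    + apply continuity_1d_2d_pt_comp with (f := exp).
      * apply derivable_continuous_pt, derivable_pt_exp.
      * apply continuity_2d_pt_mult.
        -- apply continuity_2d_pt_opp, continuity_2d_pt_mult; apply continuity_2d_pt_id1.
        -- apply continuity_2d_pt_plus. apply continuity_2d_pt_const.
           apply continuity_2d_pt_mult; apply continuity_2d_pt_id2.
  - apply filter_forall. intros y. apply (@ex_RInt_continuous R_CompleteNormedModule). intros; apply uf_cont_t.
Qed.

Lemma S_const : forall x, 0 < x -> Gs x * Gs x + Hf x = PI / 4.
Proof.
  intros x Hx.
  assert (E : Gs 0 * Gs 0 + Hf 0 = Gs x * Gs x + Hf x).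
  { apply (eq_is_derive (fun x => Gs x * Gs x + Hf x)); [|lra].
    intros t _. 
    replace (@zero R_NormedModule) with ((gf t * Gs t + Gs t * gf t) + (- 2 * gf t * Gs t)).
    2:{ unfold zero; simpl. ring. }
    apply (is_derive_plus (fun x => Gs x * Gs x) Hf).
    - apply (is_derive_mult Gs Gs); try apply Gs_derive. intros; apply Rmult_comm.
    - apply Hf_derive. }
  rewrite <- E. unfold Gs. rewrite RInt_point. unfold zero; simpl.
  unfold Hf.
  rewrite (RInt_ext _ (fun t => / (1 + t ^ 2))).
  2:{ intros t _. unfold uf. replace (- (0 * 0) * (1 + t * t)) with 0 by ring. rewrite exp_0.
      simpl. unfold Rdiv. ring_simplify. f_equal. ring. }
  rewrite (is_RInt_unique _ _ _ (atan 1 - atan 0)).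
  - rewrite atan_1, atan_0. ring.
  - apply (is_RInt_derive atan (fun t => / (1 + t ^ 2))).
    + intros t _. replace (1 + t ^ 2) with (1 + t²) by (unfold Rsqr; ring). apply is_derive_atan.
    + intros t _. apply cont_of_ex_derive. auto_derive. apply Rgt_not_eq. nra.
Qed.

Lemma exp_le_mono : forall x y, x <= y -> exp x <= exp y.
Proof. intros x y H. destruct (Rle_lt_or_eq_dec _ _ H) as [H'|H'].
  - left; apply exp_increasing; auto. - subst; lra. Qed.

Lemma exp_negsq_le : forall x, exp (- (x * x)) <= / (1 + x * x).
Proof.
  intros x. assert (H := exp_ineq1_le (x * x)).
  assert (H0 : 0 < 1 + x * x) by apply opt_pos.
  replace (exp (- (x * x))) with (/ exp (x * x)).
  2:{ rewrite exp_Ropp; auto. }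
  apply Rinv_le_contravar; auto.
Qed.

Lemma Hf_bounds : forall x, 0 <= Hf x <= / (1 + x * x).
Proof.
  intros x. unfold Hf.
  assert (Hex : ex_RInt (fun t => uf x t) 0 1).
  { apply (@ex_RInt_continuous R_CompleteNormedModule). intros; apply uf_cont_t. }
  split.
  - apply RInt_ge_0; [lra| exact Hex |]. intros t _. unfold uf.
    apply Rlt_le, Rdiv_lt_0_compat; [apply exp_pos | apply opt_pos].
  - replace (/ (1 + x * x)) with (RInt (fun _ => / (1 + x * x)) 0 1).
    2:{ rewrite RInt_const. unfold scal; simpl; unfold mult; simpl. ring. }
    apply RInt_le; [lra | exact Hex | apply ex_RInt_const |].
    intros t Ht. unfold uf.
    assert (H1 : exp (- (x * x) * (1 + t * t)) <= exp (- (x * x))).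
    { apply exp_le_mono. nra. }
    assert (H2 := exp_negsq_le x).
    assert (H3 : 1 <= 1 + t * t) by nra.
    assert (H4 := exp_pos (- (x * x) * (1 + t * t))).
    unfold Rdiv. apply Rle_trans with (exp (- (x * x) * (1 + t * t))); [|lra].
    rewrite <- (Rmult_1_r (exp _)) at 2. apply Rmult_le_compat_l; [lra|].
    rewrite <- Rinv_1. apply Rinv_le_contravar; lra.
Qed.

Lemma Hf_lim : filterlim Hf (Rbar_locally p_infty) (locally 0).
Proof.
  apply filterlim_locally. intros eps.
  exists (/ eps). intros x Hx.
  unfold ball; simpl; unfold AbsRing_ball, abs, minus, plus, opp; simpl.
  destruct (Hf_bounds x) as [H1 H2].
  assert (He := cond_pos eps).
  assert (Hx0 : 0 < x). { assert (0 < / eps) by (apply Rinv_0_lt_compat; auto). lra. }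
  assert (/ (1 + x * x) < eps).
  { rewrite <- (Rinv_inv eps). apply Rinv_lt_contravar.
    - apply Rmult_lt_0_compat; [apply Rinv_0_lt_compat; auto| apply opt_pos].
    - nra. }
  rewrite Rabs_right; lra.
Qed.

Lemma Gs_nonneg : forall x, 0 <= x -> 0 <= Gs x.
Proof. intros x Hx. unfold Gs. apply RInt_ge_0; auto. apply gf_exRInt.
  intros; unfold gf; left; apply exp_pos. Qed.

Lemma Gs_lim : filterlim Gs (Rbar_locally p_infty) (locally (sqrt PI / 2)).
Proof.
  apply filterlim_ext_loc with (f := fun x => sqrt (PI / 4 - Hf x)).
  { exists 0. intros x Hx. rewrite <- (S_const x Hx).
    replace (Gs x * Gs x + Hf x - Hf x) with (Gs x * Gs x) by ring.
    apply sqrt_square, Gs_nonneg; lra. }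
  replace (sqrt PI / 2) with (sqrt (PI / 4 - 0)).
  2:{ replace (PI / 4 - 0) with (PI / (2 * 2)) by field. rewrite sqrt_div_alt.
      - rewrite sqrt_square; lra.
      - lra. }
  apply filterlim_comp with (G := locally (PI / 4 - 0)).
  - apply filterlim_locally. intros eps.
    generalize (proj1 (filterlim_locally Hf 0) Hf_lim eps). apply filter_imp.
    intros x. unfold ball; simpl; unfold AbsRing_ball, abs, minus, plus, opp; simpl.
    intros H. replace (PI / 4 - Hf x + - (PI / 4 - 0)) with (- (Hf x + - 0)) by ring.
    rewrite Rabs_Ropp. exact H.
  - apply continuity_pt_filterlim. apply continuity_pt_sqrt.
    assert (H := PI_RGT_0). lra.
Qed.

Lemma fp_pos_pinf : filter_prod (at_right 0) (Rbar_locally p_infty)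
   (fun ab : R * R => 0 < fst ab /\ 0 < snd ab).
Proof.
  apply Filter_prod with (Q := fun a => 0 < a) (R := fun b => 0 < b).
  - exists (mkposreal 1 Rlt_0_1). intros; auto.
  - exists 0. intros; auto.
  - intros; simpl; auto.
Qed.

Lemma gen_of_antider (F f : R -> R) (la lb : R) :
  (forall t, 0 < t -> is_derive F t (f t)) ->
  (forall t, 0 < t -> continuous f t) ->
  filterlim F (at_right 0) (locally la) ->
  filterlim F (Rbar_locally p_infty) (locally lb) ->
  is_RInt_gen f (at_right 0) (Rbar_locally p_infty) (lb - la).
Proof.
  intros HD HC Ha Hb.
  assert (HDe : forall t, 0 < t -> Derive F t = f t).
  { intros t Ht; apply is_derive_unique; auto. }
  apply is_RInt_gen_ext with (f := Derive F).
  { eapply filter_imp; [|exact fp_pos_pinf]. intros [a b] [Ha0 Hb0] x Hx; simpl in *.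
    apply HDe. assert (0 < Rmin a b) by (apply Rmin_glb_lt; auto). lra. }
  apply is_RInt_gen_Derive; auto.
  - eapply filter_imp; [|exact fp_pos_pinf]. intros [a b] [Ha0 Hb0] x Hx; simpl in *.
    assert (0 < Rmin a b) by (apply Rmin_glb_lt; auto). eexists; apply HD; lra.
  - eapply filter_imp; [|exact fp_pos_pinf]. intros [a b] [Ha0 Hb0] x Hx; simpl in *.
    assert (0 < Rmin a b) by (apply Rmin_glb_lt; auto).
    apply continuous_ext_loc with (g := f).
    + assert (Hx0 : 0 < x) by lra.
      exists (mkposreal x Hx0). intros y Hy. symmetry. apply HDe.
      unfold ball in Hy; simpl in Hy; unfold AbsRing_ball, abs, minus, plus, opp in Hy; simpl in Hy.
      apply Rabs_def2 in Hy. lra.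
    + apply HC; lra.
Qed.


Definition fs (s t : R) := Rpower t (s - 1) * exp (- t).

Lemma Rpower_derive : forall s t, 0 < t -> is_derive (fun x => Rpower x s) t (s * Rpower t (s - 1)).
Proof. intros. apply is_derive_Reals, derivable_pt_lim_power; auto. Qed.

Lemma fs_derive_ex : forall s t, 0 < t -> ex_derive (fs s) t.
Proof.
  intros s t Ht. unfold fs. apply (ex_derive_mult (fun x => Rpower x (s - 1)) (fun x => exp (- x))).
  - eexists; apply Rpower_derive; auto.
  - auto_derive; auto.
Qed.

Lemma fs_cont : forall s t, 0 < t -> continuous (fs s) t.
Proof. intros; apply cont_of_ex_derive, fs_derive_ex; auto. Qed.

Lemma exp_nat_mult : forall (n : nat) x, exp (INR n * x) = exp x ^ n.
Proof.
  induction n; intros x.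
  - simpl. rewrite Rmult_0_l, exp_0. auto.
  - rewrite S_INR. replace ((INR n + 1) * x) with (INR n * x + x) by ring.
    rewrite exp_plus, IHn. simpl. ring.
Qed.

Lemma lim0_right : forall s, 0 < s ->
  filterlim (fun t => Rpower t s * exp (- t)) (at_right 0) (locally 0).
Proof.
  intros s Hs. apply filterlim_locally. intros eps.
  assert (He := cond_pos eps).
  assert (Hd : 0 < Rpower eps (/ s)) by (unfold Rpower; apply exp_pos).
  exists (mkposreal _ Hd). intros t Ht Ht0. simpl in Ht.
  unfold ball in Ht |- *; simpl in Ht |- *; unfold AbsRing_ball, abs, minus, plus, opp in Ht |- *; simpl in Ht |- *.
  rewrite Ropp_0, Rplus_0_r in Ht. rewrite Rabs_right in Ht by lra.
  assert (H1 : Rpower t s < eps).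
  { replace (pos eps) with (Rpower (Rpower eps (/ s)) s).
    - apply Rlt_Rpower_l; lra.
    - rewrite Rpower_mult. rewrite Rinv_l by lra. apply Rpower_1; auto. }
  assert (H2 : exp (- t) <= 1). { rewrite <- exp_0. apply exp_le_mono. lra. }
  assert (H3 : 0 < Rpower t s) by (unfold Rpower; apply exp_pos).
  assert (H4 := exp_pos (- t)).
  rewrite Ropp_0, Rplus_0_r. rewrite Rabs_right by nra. nra.
Qed.

Lemma exists_nat_ge : forall s, exists N : nat, s <= INR N.
Proof.
  intros s. destruct (Rle_dec s 0) as [Hle|Hle].
  - exists 0%nat. simpl; lra.
  - destruct (nfloor_ex s) as [m Hm]; [lra|]. exists (S m). rewrite S_INR. lra.
Qed.

Lemma liminf_pinf : forall s, 0 < s ->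
  filterlim (fun t => Rpower t s * exp (- t)) (Rbar_locally p_infty) (locally 0).
Proof.
  intros s Hs. destruct (exists_nat_ge s) as [N HN].
  set (C := INR (S N) ^ (S N)).
  assert (HC : 0 < C) by (unfold C; apply pow_lt, lt_0_INR; lia).
  apply filterlim_locally. intros eps.
  assert (He := cond_pos eps).
  exists (Rmax 1 (C / eps)). intros t Ht.
  assert (Ht1 : 1 < t) by (eapply Rle_lt_trans; [apply Rmax_l | exact Ht]).
  assert (Ht2 : C / eps < t) by (eapply Rle_lt_trans; [apply Rmax_r | exact Ht]).
  unfold ball; simpl; unfold AbsRing_ball, abs, minus, plus, opp; simpl.
  assert (H3 : 0 < Rpower t s) by (unfold Rpower; apply exp_pos).
  assert (H4 := exp_pos (- t)).
  rewrite Ropp_0, Rplus_0_r. rewrite Rabs_right by nra.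
  assert (H5 : Rpower t s <= t ^ N).
  { rewrite <- Rpower_pow by lra. apply Rle_Rpower; lra. }
  assert (HSN : 0 < INR (S N)) by (apply lt_0_INR; lia).
  assert (H6 : (t / INR (S N)) ^ (S N) <= exp t).
  { replace t with (INR (S N) * (t / INR (S N))) at 2 by (field; lra).
    rewrite exp_nat_mult. apply pow_incr. split.
    - apply Rlt_le, Rdiv_lt_0_compat; lra.
    - generalize (exp_ineq1_le (t / INR (S N))). intros. 
      assert (0 < t / INR (S N)) by (apply Rdiv_lt_0_compat; lra). lra. }
  assert (H7 : t ^ N * exp (- t) <= C / t).
  { rewrite exp_Ropp. unfold Rdiv in H6. rewrite Rpow_mult_distr in H6.
    rewrite pow_inv in H6. fold C in H6.
    assert (Htp : 0 < t ^ S N) by (apply pow_lt; lra).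
    assert (Hex := exp_pos t).
    apply Rmult_le_reg_r with (exp t * t); [nra|].
    replace (t ^ N * / exp t * (exp t * t)) with (t ^ S N) by (simpl; field; lra).
    replace (C / t * (exp t * t)) with (C * exp t) by (field; lra).
    apply Rmult_le_reg_r with (/ C). apply Rinv_0_lt_compat; auto.
    replace (C * exp t * / C) with (exp t) by (field; lra). lra. }
  assert (H8 : C / t < eps).
  { apply Rmult_lt_reg_r with (t / eps). apply Rdiv_lt_0_compat; lra.
    replace (C / t * (t / eps)) with (C / eps) by (field; lra).
    replace (eps * (t / eps)) with t by (field; lra). auto. }
  apply Rle_lt_trans with (t ^ N * exp (- t)); [|lra].
  apply Rmult_le_compat_r; lra.
Qed.

Lemma cont_at_right (F : R -> R) : continuous F 0 -> filterlim F (at_right 0) (locally (F 0)).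
Proof. intros H. eapply filterlim_filter_le_1; [apply filter_le_within | exact H]. Qed.

Lemma fs_step : forall s l, 0 < s ->
  is_RInt_gen (fs s) (at_right 0) (Rbar_locally p_infty) l ->
  is_RInt_gen (fs (s + 1)) (at_right 0) (Rbar_locally p_infty) (s * l).
Proof.
  intros s l Hs Hl.
  set (G := fun t => Rpower t s * exp (- t)).
  set (dG := fun t => s * (Rpower t (s - 1) * exp (- t)) - Rpower t s * exp (- t)).
  assert (HG : is_RInt_gen dG (at_right 0) (Rbar_locally p_infty) (0 - 0)).
  { apply gen_of_antider with (F := G).
    - intros t Ht. unfold G, dG.
      replace (s * (Rpower t (s - 1) * exp (- t)) - Rpower t s * exp (- t))
        with ((s * Rpower t (s - 1)) * exp (- t) + Rpower t s * (- exp (- t))) by ring.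
      apply (is_derive_mult (fun x => Rpower x s) (fun x => exp (- x))).
      + apply Rpower_derive; auto.
      + auto_derive; auto. ring.
      + intros; apply Rmult_comm.
    - intros t Ht. apply cont_of_ex_derive. unfold dG.
      apply (ex_derive_minus (fun t => s * (Rpower t (s - 1) * exp (- t)))).
      + apply (ex_derive_scal (fun t => Rpower t (s - 1) * exp (- t))). apply fs_derive_ex; auto.
      + apply (ex_derive_mult (fun x => Rpower x s) (fun x => exp (- x))).
        * eexists; apply Rpower_derive; auto.
        * auto_derive; auto.
    - apply lim0_right; auto.
    - apply liminf_pinf; auto. }
  assert (H2 := is_RInt_gen_minus _ _ _ _ (is_RInt_gen_scal _ s _ Hl) HG).
  replace (s * l) with (minus (scal s l) (0 - 0)) by (unfold minus, plus, opp, scal; simpl; unfold mult; simpl; ring).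
  apply is_RInt_gen_ext with (2 := H2).
  apply filter_forall. intros ab x _. unfold dG, fs, minus, plus, opp, scal; simpl; unfold mult; simpl.
  replace (s + 1 - 1) with s by ring. ring.
Qed.

Lemma fs_one : is_RInt_gen (fs 1) (at_right 0) (Rbar_locally p_infty) 1.
Proof.
  replace 1 with (0 - (- exp (- 0))) at 2 by (rewrite Ropp_0, exp_0; ring).
  apply gen_of_antider with (F := fun t => - exp (- t)).
  - intros t Ht. unfold fs. replace (1 - 1) with 0 by ring. rewrite Rpower_O by auto.
    auto_derive; auto. ring.
  - intros; apply fs_cont; auto.
  - apply (cont_at_right (fun t => - exp (- t))). apply cont_of_ex_derive. auto_derive; auto.
  - apply filterlim_locally. intros eps. assert (He := cond_pos eps).
    exists (/ eps). intros t Ht.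
    unfold ball; simpl; unfold AbsRing_ball, abs, minus, plus, opp; simpl.
    assert (0 < / eps) by (apply Rinv_0_lt_compat; auto).
    assert (H1 := exp_ineq1_le t). assert (H2 := exp_pos (- t)).
    rewrite Ropp_0, Rplus_0_r, Rabs_Ropp, Rabs_right by lra.
    rewrite exp_Ropp. rewrite <- (Rinv_inv eps). apply Rinv_lt_contravar.
    + apply Rmult_lt_0_compat; auto. apply exp_pos.
    + lra.
Qed.

Lemma sqrt_cont0 : continuous sqrt 0.
Proof. apply continuity_pt_filterlim, continuity_pt_sqrt. lra. Qed.

Lemma fs_half : is_RInt_gen (fs (1/2)) (at_right 0) (Rbar_locally p_infty) (sqrt PI).
Proof.
  replace (sqrt PI) with (2 * (sqrt PI / 2) - 2 * Gs (sqrt 0)).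
  2:{ rewrite sqrt_0. unfold Gs. rewrite RInt_point. unfold zero; simpl. field. }
  apply gen_of_antider with (F := fun t => 2 * Gs (sqrt t)).
  - intros t Ht. assert (Hs : 0 < sqrt t) by (apply sqrt_lt_R0; auto).
    assert (E : fs (1/2) t = 2 * (/ (2 * sqrt t) * gf (sqrt t))).
    { unfold fs, gf. replace (1/2 - 1) with (- / 2) by field.
      rewrite Rpower_Ropp, Rpower_sqrt by auto. rewrite sqrt_sqrt by lra. field. lra. }
    rewrite E. apply (is_derive_scal (fun t => Gs (sqrt t))).
    apply (is_derive_comp Gs sqrt t).
    + apply Gs_derive.
    + apply is_derive_Reals, derivable_pt_lim_sqrt; auto.
  - intros; apply fs_cont; auto.
  - apply (cont_at_right (fun t => 2 * Gs (sqrt t))).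
    apply (continuous_comp (fun t => Gs (sqrt t)) (fun y => 2 * y)).
    + apply (continuous_comp sqrt Gs). apply sqrt_cont0. apply cont_of_ex_derive. eexists; apply Gs_derive.
    + apply cont_of_ex_derive. auto_derive; auto.
  - apply (filterlim_comp _ _ _ (fun t => Gs (sqrt t)) (fun y => 2 * y) _ (locally (sqrt PI / 2))).
    + apply (filterlim_comp _ _ _ sqrt Gs _ (Rbar_locally p_infty)).
      * apply filterlim_sqrt_p.
      * apply Gs_lim.
    + apply (continuous_comp (fun y => y) (fun y => 2 * y)). apply continuous_id.
      apply cont_of_ex_derive. auto_derive; auto.
Qed.

Lemma is_Gamma_nat : forall k, is_RInt_gen (fs (INR k + 1)) (at_right 0) (Rbar_locally p_infty) (INR (fact k)).
Proof.
  induction k.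
  - simpl. rewrite Rplus_0_l. apply fs_one.
  - rewrite S_INR. replace (INR (fact (S k))) with ((INR k + 1) * INR (fact k)).
    2:{ rewrite fact_simpl, mult_INR, S_INR. ring. }
    apply fs_step; auto. apply Rplus_le_lt_0_compat; [apply pos_INR| lra].
Qed.

Lemma is_Gamma_half : forall k, is_RInt_gen (fs (INR k + 1/2)) (at_right 0) (Rbar_locally p_infty) (sqrt PI * hh k).
Proof.
  induction k.
  - simpl. rewrite Rplus_0_l, Rmult_1_r. apply fs_half.
  - rewrite S_INR. simpl hh. replace (sqrt PI * (hh k * (INR k + 1/2))) with ((INR k + 1/2) * (sqrt PI * hh k)) by ring.
    replace (INR k + 1 + 1/2) with ((INR k + 1/2) + 1) by ring.
    apply fs_step; auto. apply Rplus_le_lt_0_compat; [apply pos_INR| lra].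
Qed.

Lemma Gamma_nat : forall k, Gamma (INR k + 1) = INR (fact k).
Proof. intros k. apply is_RInt_gen_unique. apply is_Gamma_nat. Qed.

Lemma Gamma_half : forall k, Gamma (INR k + 1/2) = sqrt PI * hh k.
Proof. intros k. apply is_RInt_gen_unique. apply is_Gamma_half. Qed.

Lemma fact2 : forall m, INR (fact (2 * m)) = 4 ^ m * INR (fact m) * hh m.
Proof.
  induction m.
  - simpl. ring.
  - replace (2 * S m)%nat with (S (S (2 * m))) by lia.
    rewrite !fact_simpl, !mult_INR, IHm. simpl hh.
    rewrite !S_INR, mult_INR. simpl (INR 2). simpl pow. field.
Qed.

Lemma num1 : 81 * PI ^ 3 <= 128 * exp 1 ^ 3.
Proof.
  assert (H1 := PI_ub). assert (H2 := e_lb). assert (H3 := PI_RGT_0).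
  assert (PI ^ 3 <= 3.1416 ^ 3) by (apply pow_incr; lra).
  assert (2.718 ^ 3 <= exp 1 ^ 3) by (apply pow_incr; lra).
  lra.
Qed.

Lemma sqrt_sq : forall x, 0 <= x -> sqrt x * sqrt x = x.
Proof. intros; apply sqrt_sqrt; auto. Qed.

Lemma sq_le_to_le : forall a b, 0 <= a -> 0 <= b -> b * b <= a * a -> b <= a.
Proof. intros; nra. Qed.

Lemma odd_final : forall j : nat, let k := INR (S j) in
  exp 1 ^ S j / k ^ S j * 3 / (2 * sqrt 2 * (exp 1 ^ 2 * sqrt (exp 1)))
  <= hh (S j) * k / (2 * INR (fact (S j)) ^ 2).
Proof.
  intros j k.
  assert (Hk : 0 < k) by (unfold k; apply lt_0_INR; lia).
  assert (HB1 := B1 j). assert (HB3 := B3 j). cbv zeta in HB1, HB3. fold k in HB1, HB3.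
  assert (He := exp_pos 1). assert (Hel := e_lb).
  set (e := exp 1) in *. set (F := INR (fact (S j))) in *. set (h := hh (S j)) in *.
  assert (HF : 0 < F) by (unfold F; apply lt_0_INR, lt_O_fact).
  assert (Hh : 0 < h) by (unfold h; apply hh_pos).
  set (s2 := sqrt 2). set (se := sqrt e).
  assert (Hs2 : s2 * s2 = 2) by (apply sqrt_sq; lra).
  assert (Hse : se * se = e) by (apply sqrt_sq; lra).
  assert (Hs2p : 0 < s2) by (apply sqrt_lt_R0; lra).
  assert (Hsep : 0 < se) by (apply sqrt_lt_R0; lra).
  set (ek := e ^ S j). set (kk := k ^ S j).
  assert (Hek : 0 < ek) by (apply pow_lt; auto). assert (Hkk : 0 < kk) by (apply pow_lt; auto).
  replace (e ^ (2 * S j)) with (ek * ek) in HB3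
    by (unfold ek; replace (2 * S j)%nat with (S j * 2)%nat by lia; rewrite pow_mult; simpl; ring).
  replace (k ^ (2 * S j + 1)) with (kk * kk * k) in HB3
    by (unfold kk; rewrite pow_add; replace (2 * S j)%nat with (S j * 2)%nat by lia; rewrite pow_mult; simpl; ring).
  assert (He3 : 18 <= e ^ 3).
  { assert (2.718 ^ 3 <= e ^ 3) by (apply pow_incr; lra). lra. }
  assert (He2 : 0 < e ^ 2) by (apply pow_lt; lra).
  clearbody h F ek kk s2 se e k.
  assert (Key : 3 * ek * F ^ 2 <= h * k * s2 * e ^ 2 * se * kk).
  { apply sq_le_to_le.
    - repeat apply Rmult_le_pos; try lra; apply pow_le; lra.
    - apply Rmult_le_pos; [lra| apply pow2_ge_0].
    - assert (S1 : 3 * ek * F ^ 2 * (3 * ek * F ^ 2) = 9 * F ^ 2 * (F ^ 2 * (ek * ek))) by ring.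
      assert (S2 : h * k * s2 * e ^ 2 * se * kk * (h * k * s2 * e ^ 2 * se * kk)
                   = 2 * e ^ 3 * (h ^ 2 * k * (e ^ 2 * (kk * kk * k)))).
      { replace (h * k * s2 * e ^ 2 * se * kk * (h * k * s2 * e ^ 2 * se * kk))
          with (h ^ 2 * k ^ 2 * (s2 * s2) * e ^ 4 * (se * se) * kk ^ 2) by ring.
        rewrite Hs2, Hse. ring. }
      rewrite S1, S2.
      assert (T1 : 9 * F ^ 2 * (F ^ 2 * (ek * ek)) <= 9 * F ^ 2 * (e ^ 2 * (kk * kk * k))).
      { apply Rmult_le_compat_l; [nra| exact HB3]. }
      assert (T2 : 9 * F ^ 2 * (e ^ 2 * (kk * kk * k)) <= 9 * (4 * h ^ 2 * k) * (e ^ 2 * (kk * kk * k))).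
      { apply Rmult_le_compat_r. apply Rmult_le_pos; [nra|]. repeat apply Rmult_le_pos; lra. lra. }
      assert (T3 : 9 * (4 * h ^ 2 * k) * (e ^ 2 * (kk * kk * k)) <= 2 * e ^ 3 * (h ^ 2 * k * (e ^ 2 * (kk * kk * k)))).
      { replace (9 * (4 * h ^ 2 * k) * (e ^ 2 * (kk * kk * k))) with (36 * (h ^ 2 * k * (e ^ 2 * (kk * kk * k)))) by ring.
        apply Rmult_le_compat_r; [|lra]. apply Rmult_le_pos; [nra|]. apply Rmult_le_pos; [nra|].
        repeat apply Rmult_le_pos; lra. }
      lra. }
  assert (HD : 0 < 2 * s2 * e ^ 2 * se * kk * F ^ 2) by (repeat apply Rmult_lt_0_compat; try lra; nra).
  replace (ek / kk * 3 / (2 * s2 * (e ^ 2 * se))) with ((3 * ek * F ^ 2) * / (2 * s2 * e ^ 2 * se * kk * F ^ 2))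
    by (field; repeat split; try lra; nra).
  replace (h * k / (2 * F ^ 2)) with ((h * k * s2 * e ^ 2 * se * kk) * / (2 * s2 * e ^ 2 * se * kk * F ^ 2))
    by (field; repeat split; try lra; nra).
  apply Rmult_le_compat_r; [left; apply Rinv_0_lt_compat; exact HD| exact Key].
Qed.


Lemma even_final : forall j : nat, let k := INR (S j) in let m := k + / 2 in
  (PI * exp 1 / m) ^ S j * sqrt (PI * exp 1 / m) * 3 / (2 * sqrt 2 * (exp 1 ^ 2 * sqrt (exp 1)) * (2 * k))
  <= PI ^ j * INR (fact (S j)) / (2 * k * (2 * k + 1) * hh (S j) ^ 2).
Proof.
  intros j k m.
  assert (Hk : 1 <= k) by (unfold k; rewrite S_INR; assert (H := pos_INR j); lra).
  assert (HB2 := B2 j). assert (HB3 := B3 j). assert (HB4 := B4 j). cbv zeta in HB2, HB3, HB4.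
  fold k in HB2, HB3, HB4. replace (k + / 2) with m in HB4 by reflexivity.
  assert (He := exp_pos 1). assert (Hel := e_lb). assert (HN := num1). assert (HP := PI_RGT_0).
  set (e := exp 1) in *. set (F := INR (fact (S j))) in *. set (h := hh (S j)) in *.
  assert (HF : 0 < F) by (unfold F; apply lt_0_INR, lt_O_fact).
  assert (Hh : 0 < h) by (unfold h; apply hh_pos).
  assert (Hm : 0 < m) by (unfold m; lra).
  rewrite sqrt_div_alt by lra. rewrite sqrt_mult by lra.
  set (P := PI) in *.
  set (s2 := sqrt 2). set (se := sqrt e). set (sp := sqrt P). set (sm := sqrt m).
  assert (Hs2 : s2 * s2 = 2) by (apply sqrt_sq; lra).
  assert (Hse : se * se = e) by (apply sqrt_sq; lra).
  assert (Hsp : sp * sp = P) by (apply sqrt_sq; lra).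
  assert (Hsm : sm * sm = m) by (apply sqrt_sq; lra).
  assert (Hs2p : 0 < s2) by (apply sqrt_lt_R0; lra).
  assert (Hsep : 0 < se) by (apply sqrt_lt_R0; lra).
  assert (Hspp : 0 < sp) by (apply sqrt_lt_R0; lra).
  assert (Hsmp : 0 < sm) by (apply sqrt_lt_R0; lra).
  replace ((P * e / m) ^ S j) with (P ^ S j * e ^ S j * / m ^ S j) by (unfold Rdiv; rewrite !Rpow_mult_distr, pow_inv; ring).
  set (ek := e ^ S j). set (kk := k ^ S j). set (mk := m ^ S j). set (pj := P ^ j).
  replace (P ^ S j) with (P * pj) by (unfold pj; simpl; ring).
  assert (Hek : 0 < ek) by (apply pow_lt; auto). assert (Hkk : 0 < kk) by (apply pow_lt; lra).
  assert (Hmk : 0 < mk) by (apply pow_lt; auto). assert (Hpj : 0 < pj) by (apply pow_lt; auto).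
  replace (e ^ (2 * S j)) with (ek * ek) in HB3
    by (unfold ek; replace (2 * S j)%nat with (S j * 2)%nat by lia; rewrite pow_mult; simpl; ring).
  replace (k ^ (2 * S j + 1)) with (kk * kk * k) in HB3, HB4
    by (unfold kk; rewrite pow_add; replace (2 * S j)%nat with (S j * 2)%nat by lia; rewrite pow_mult; simpl; ring).
  replace (m ^ (2 * S j + 1)) with (mk * mk * m) in HB4
    by (unfold mk; rewrite pow_add; replace (2 * S j)%nat with (S j * 2)%nat by lia; rewrite pow_mult; simpl; ring).
  assert (He2 : 0 < e ^ 2) by (apply pow_lt; lra).
  assert (Hm2 : 2 * k + 1 = 2 * m) by (unfold m; field).
  assert (H3k : 8 * m <= 3 * (3 * k + 1)) by (unfold m; lra).
  clearbody h F ek kk mk pj s2 se sp sm e P m k.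
  assert (Key : 3 * P * sp * ek * m * h ^ 2 <= F * s2 * e ^ 2 * mk * sm).
  { apply sq_le_to_le.
    - apply Rmult_le_pos; [|lra]. repeat apply Rmult_le_pos; lra.
    - apply Rmult_le_pos; [|nra]. repeat apply Rmult_le_pos; lra.
    - assert (S1 : 3 * P * sp * ek * m * h ^ 2 * (3 * P * sp * ek * m * h ^ 2)
                   = 9 * P ^ 2 * (sp * sp) * m ^ 2 * (ek * ek) * (h ^ 2) ^ 2) by ring.
      assert (S2 : F * s2 * e ^ 2 * mk * sm * (F * s2 * e ^ 2 * mk * sm)
                   = F ^ 2 * (s2 * s2) * e ^ 4 * (mk * mk) * (sm * sm)) by ring.
      rewrite S1, S2, Hsp, Hs2, Hsm.
      set (A := 3 * k + 1). assert (HA : 0 < A) by (unfold A; lra).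
      apply Rmult_le_reg_l with (A ^ 2); [nra|].
      assert (T0 : (A * h ^ 2) ^ 2 <= (F ^ 2) ^ 2).
      { apply pow_incr. split; [apply Rmult_le_pos; [lra| apply pow2_ge_0]| unfold A; lra]. }
      assert (C0 : 0 <= 9 * P ^ 2 * P * m ^ 2 * (ek * ek)) by (repeat apply Rmult_le_pos; nra).
      apply Rle_trans with (9 * P ^ 2 * P * m ^ 2 * (ek * ek) * (F ^ 2) ^ 2).
      { replace (A ^ 2 * (9 * P ^ 2 * P * m ^ 2 * (ek * ek) * (h ^ 2) ^ 2))
          with (9 * P ^ 2 * P * m ^ 2 * (ek * ek) * (A * h ^ 2) ^ 2) by ring.
        apply Rmult_le_compat_l; auto. }
      apply Rle_trans with (9 * P ^ 2 * P * m ^ 2 * F ^ 2 * (e * (mk * mk * m))).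
      { replace (9 * P ^ 2 * P * m ^ 2 * (ek * ek) * (F ^ 2) ^ 2)
          with (9 * P ^ 2 * P * m ^ 2 * F ^ 2 * (F ^ 2 * (ek * ek))) by ring.
        apply Rmult_le_compat_l; [repeat apply Rmult_le_pos; nra|].
        apply Rle_trans with (e ^ 2 * (kk * kk * k)); auto.
        replace (e ^ 2 * (kk * kk * k)) with (e * (e * (kk * kk * k))) by ring.
        apply Rmult_le_compat_l; lra. }
      replace (A ^ 2 * (F ^ 2 * 2 * e ^ 4 * (mk * mk) * m)) with ((2 * e ^ 3 * A ^ 2) * (F ^ 2 * (e * (mk * mk * m)))) by ring.
      replace (9 * P ^ 2 * P * m ^ 2 * F ^ 2 * (e * (mk * mk * m))) with ((9 * P ^ 3 * m ^ 2) * (F ^ 2 * (e * (mk * mk * m)))) by ring.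
      apply Rmult_le_compat_r; [repeat apply Rmult_le_pos; nra|].
      assert (64 * m ^ 2 <= 9 * A ^ 2) by (unfold A; nra).
      assert (0 <= P ^ 3) by (apply pow_le; lra).
      nra. }
  assert (HD : 0 < 4 * k * m * h ^ 2 * s2 * e ^ 2 * mk * sm) by (repeat apply Rmult_lt_0_compat; nra).
  replace (P * pj * ek * / mk * (sp * se / sm) * 3 / (2 * s2 * (e ^ 2 * se) * (2 * k)))
    with (pj * (3 * P * sp * ek * m * h ^ 2) * / (4 * k * m * h ^ 2 * s2 * e ^ 2 * mk * sm))
    by (field; repeat split; nra).
  replace (pj * F / (2 * k * (2 * k + 1) * h ^ 2))
    with (pj * (F * s2 * e ^ 2 * mk * sm) * / (4 * k * m * h ^ 2 * s2 * e ^ 2 * mk * sm))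
    by (rewrite Hm2; field; repeat split; nra).
  apply Rmult_le_compat_r; [left; apply Rinv_0_lt_compat; exact HD|].
  apply Rmult_le_compat_l; lra.
Qed.

Lemma P1_nonneg : forall k, 0 <= P1 k.
Proof. induction k; [simpl; lra|]. change (P1 (S k)) with (P1 k + / INR (S k)).
  assert (0 < / INR (S k)) by (apply Rinv_0_lt_compat, lt_0_INR; lia). lra. Qed.

Lemma P1_S : forall k, 1 <= P1 (S k).
Proof.
  induction k.
  - change (P1 1) with (0 + / INR 1). simpl INR. rewrite Rinv_1. lra.
  - change (P1 (S (S k))) with (P1 (S k) + / INR (S (S k))). assert (0 < / INR (S (S k))) by (apply Rinv_0_lt_compat, lt_0_INR; lia). lra.
Qed.

Lemma Qn_pos : forall n, (3 <= n)%nat -> 0 < Qn n.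
Proof.
  intros n Hn. unfold Qn.
  assert (H1 := P1_nonneg (n - 3)).
  assert (H2 : 1 <= P1 (n - 2)) by (replace (n - 2)%nat with (S (n - 3)) by lia; apply P1_S).
  assert (H3 : -1 < ln (3 / 4)).
  { rewrite <- (ln_exp (-1)). apply ln_increasing. apply exp_pos.
    assert (H := e_lb). assert (Hx := exp_pos (-1)).
    assert (exp (-1) * exp 1 = 1) by (rewrite <- exp_plus; replace (-1 + 1) with 0 by ring; apply exp_0).
    nra. }
  assert (H4 : 3 <= 3 ^ (n - 2)).
  { replace (n - 2)%nat with (S (n - 3)) by lia. simpl.
    assert (1 <= 3 ^ (n - 3)) by (apply pow_R1_Rle; lra). lra. }
  assert (H5 : / 3 ^ (n - 2) <= / 3) by (apply Rinv_le_contravar; lra).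
  assert (H6 : 0 < / 3 ^ (n - 2)) by (apply Rinv_0_lt_compat; lra).
  assert (0 < (1 - / 3 ^ (n - 2)) * (P1 (n - 2) + ln (3 / 4))).
  { apply Rmult_lt_0_compat; lra. }
  lra.
Qed.

Lemma parity3 : forall n, (3 <= n)%nat -> exists j, n = (2 * j + 3)%nat \/ n = (2 * j + 4)%nat.
Proof.
  intros n Hn.
  destruct (Nat.Even_or_Odd (n - 3)) as [[p Hp]|[p Hp]]; exists p; [left|right]; lia.
Qed.

Lemma Rpower_half : forall x j, 0 < x -> Rpower x (INR j + 1 / 2) = x ^ j * sqrt x.
Proof. intros. rewrite Rpower_plus, Rpower_pow by auto. replace (1 / 2) with (/ 2) by field.
  rewrite Rpower_sqrt; auto. Qed.

Lemma Rpower_nat1 : forall x j, 0 < x -> Rpower x (INR j + 1) = x ^ S j.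
Proof. intros. rewrite <- S_INR. apply Rpower_pow; auto. Qed.

Theorem lemma4p1 (n : nat) (hn : (3 <= n)%nat) :
  Kn n >=
  Rpower (2 * PI * exp 1 / (INR n - 1)) ((INR n - 1) / 2)
  * (3 * Qn n / (Rpower 2 (3 / 2) * exp (5 / 2) * (INR n - 2))).
Proof.
  assert (HQ := Qn_pos n hn). set (Q := Qn n) in *.
  assert (E32 : Rpower 2 (3 / 2) = 2 * sqrt 2).
  { replace (3 / 2) with (1 + / 2) by field. rewrite Rpower_plus, Rpower_1, Rpower_sqrt; lra. }
  assert (E52 : exp (5 / 2) = exp 1 ^ 2 * sqrt (exp 1)).
  { assert (Es : sqrt (exp 1) = exp (/ 2)).
    { rewrite <- Rpower_sqrt by apply exp_pos. unfold Rpower. rewrite ln_exp. f_equal; ring. }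
    rewrite Es. replace (5 / 2) with (1 + 1 + / 2) by field. rewrite !exp_plus. ring. }
  rewrite E32, E52.
  destruct (parity3 n hn) as [j [Hj|Hj]]; subst n.
  -
    unfold Kn, Vsph.
    replace (2 * j + 3 - 2)%nat with (2 * j + 1)%nat by lia.
    replace (2 * j + 3 - 3)%nat with (2 * j)%nat by lia.
    replace (2 * j + 3 - 1)%nat with (2 * j + 2)%nat by lia.
    fold Q.
    assert (A1 : INR (2 * j + 1 + 1) / 2 = INR j + 1) by (rewrite ?plus_INR, ?mult_INR, ?S_INR; change (INR 0) with 0; field).
    assert (A2 : INR (2 * j + 1) / 2 = INR j + 1 / 2) by (rewrite ?plus_INR, ?mult_INR, ?S_INR; change (INR 0) with 0; field).
    assert (A3 : INR (2 * j + 3) / 2 = INR (S j) + 1 / 2) by (rewrite ?plus_INR, ?mult_INR, ?S_INR; change (INR 0) with 0; field).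
    assert (A4 : INR (2 * j + 2 + 1) / 2 = INR (S j) + 1 / 2) by (rewrite ?plus_INR, ?mult_INR, ?S_INR; change (INR 0) with 0; field).
    assert (A5 : INR (2 * j + 3) = INR (2 * S j) + 1) by (rewrite ?plus_INR, ?mult_INR, ?S_INR; change (INR 0) with 0; field).
    assert (A6 : INR (2 * j + 3) - 2 = 2 * INR j + 1) by (rewrite ?plus_INR, ?mult_INR, ?S_INR; change (INR 0) with 0; field).
    assert (A7 : INR (2 * j + 3) - 1 = 2 * INR (S j)) by (rewrite ?plus_INR, ?mult_INR, ?S_INR; change (INR 0) with 0; field).
    assert (HP := PI_RGT_0).
    rewrite A1, A2, A4, A3, A6, A7, A5.
    rewrite Gamma_nat, Gamma_half, Gamma_half, Gamma_nat.
    rewrite Rpower_nat1, Rpower_half, Rpower_half by lra.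
    rewrite fact2.
    replace (2 * INR (S j) / 2) with (INR (S j)) by field.
    replace (2 * PI * exp 1 / (2 * INR (S j))) with (PI * exp 1 / INR (S j)).
    2:{ field. apply not_0_INR. lia. }
    rewrite Rpower_pow.
    2:{ apply Rdiv_lt_0_compat. apply Rmult_lt_0_compat; [lra| apply exp_pos]. apply lt_0_INR; lia. }
    assert (OF := odd_final j). cbv zeta in OF.
    rewrite Rpow_mult_distr, pow2_sqrt by lra.
    assert (E4 : 4 ^ S j = 2 ^ (2 * j + 1) * 2).
    { replace 4 with (2 ^ 2) by ring. rewrite <- pow_mult.
      replace (2 * S j)%nat with (2 * j + 1 + 1)%nat by lia. rewrite pow_add. ring. }
    rewrite E4.
    assert (Ehh : hh (S j) = hh j * (INR j + 1 / 2)) by reflexivity.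
    assert (Hsp : 0 < sqrt PI) by (apply sqrt_lt_R0; lra).
    assert (Hhj := hh_pos j). assert (Hhs := hh_pos (S j)).
    assert (Hfj : 0 < INR (fact j)) by (apply lt_0_INR, lt_O_fact).
    assert (Hfs : INR (fact (S j)) = INR (S j) * INR (fact j)) by (rewrite fact_simpl, mult_INR; auto).
    assert (Hk : 0 < INR (S j)) by (apply lt_0_INR; lia).
    assert (Hj0 := pos_INR j).
    assert (He := exp_pos 1).
    assert (Hs2 : 0 < sqrt 2) by (apply sqrt_lt_R0; lra).
    assert (Hse : 0 < sqrt (exp 1)) by (apply sqrt_lt_R0; lra).
    assert (Hpj : 0 < PI ^ j) by (apply pow_lt; lra).
    assert (Hkk : 0 < INR (S j) ^ S j) by (apply pow_lt; lra).
    assert (H2j : 0 < 2 ^ (2 * j + 1)) by (apply pow_lt; lra).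
    assert (HC : 0 <= Q * PI ^ S j / (2 * INR j + 1)).
    { apply Rle_mult_inv_pos; [apply Rmult_le_pos; [lra| apply pow_le; lra] | lra]. }
    apply Rle_ge.
    apply Rle_trans with (Q * PI ^ S j / (2 * INR j + 1) *
       (exp 1 ^ S j / INR (S j) ^ S j * 3 / (2 * sqrt 2 * (exp 1 ^ 2 * sqrt (exp 1))))).
    { right. unfold Rdiv. rewrite !Rpow_mult_distr, pow_inv.
      field. repeat split; lra. }
    apply Rle_trans with (Q * PI ^ S j / (2 * INR j + 1) *
       (hh (S j) * INR (S j) / (2 * INR (fact (S j)) ^ 2))).
    { apply Rmult_le_compat_l; auto. }
    right. rewrite Hfs, Ehh, <- !tech_pow_Rmult, S_INR.
    field. repeat split; try lra.
  -
    unfold Kn, Vsph.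
    replace (2 * j + 4 - 2)%nat with (2 * j + 2)%nat by lia.
    replace (2 * j + 4 - 3)%nat with (2 * j + 1)%nat by lia.
    replace (2 * j + 4 - 1)%nat with (2 * j + 3)%nat by lia.
    fold Q.
    assert (A1 : INR (2 * j + 1 + 1) / 2 = INR j + 1) by (rewrite ?plus_INR, ?mult_INR, ?S_INR; change (INR 0) with 0; field).
    assert (A2 : INR (2 * j + 2 + 1) / 2 = INR (S j) + 1 / 2) by (rewrite ?plus_INR, ?mult_INR, ?S_INR; change (INR 0) with 0; field).
    assert (A3 : INR (2 * j + 3 + 1) / 2 = INR (S j) + 1) by (rewrite ?plus_INR, ?mult_INR, ?S_INR; change (INR 0) with 0; field).
    assert (A4 : INR (2 * j + 4) / 2 = INR (S j) + 1) by (rewrite ?plus_INR, ?mult_INR, ?S_INR; change (INR 0) with 0; field).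
    assert (A5 : INR (2 * j + 4) = INR (2 * j + 3) + 1) by (rewrite ?plus_INR, ?mult_INR, ?S_INR; change (INR 0) with 0; field).
    assert (A6 : INR (2 * j + 4) - 2 = 2 * INR (S j)) by (rewrite ?plus_INR, ?mult_INR, ?S_INR; change (INR 0) with 0; field).
    assert (A7 : INR (2 * j + 4) - 1 = 2 * (INR (S j) + / 2)) by (rewrite ?plus_INR, ?mult_INR, ?S_INR; change (INR 0) with 0; field).
    assert (HP := PI_RGT_0).
    rewrite A1, A2, A3, A4, A6, A7, A5.
    rewrite !Gamma_nat, !Gamma_half.
    rewrite !Rpower_nat1, Rpower_half by lra.
    assert (Ef : INR (fact (2 * j + 3)) = (2 * INR (S j) + 1) * (4 ^ S j * INR (fact (S j)) * hh (S j))).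
    { replace (2 * j + 3)%nat with (S (2 * S j)) by lia. rewrite fact_simpl, mult_INR, fact2.
      f_equal. rewrite S_INR, mult_INR, S_INR. simpl. ring. }
    rewrite Ef.
    set (m := INR (S j) + / 2).
    assert (Hk : 0 < INR (S j)) by (apply lt_0_INR; lia).
    assert (Hm : 0 < m) by (unfold m; lra).
    replace (2 * m / 2) with (INR (S j) + 1 / 2) by (unfold m; field).
    replace (2 * PI * exp 1 / (2 * m)) with (PI * exp 1 / m) by (field; lra).
    assert (He := exp_pos 1).
    rewrite Rpower_half.
    2:{ apply Rdiv_lt_0_compat; [apply Rmult_lt_0_compat|]; lra. }
    assert (EF := even_final j). cbv zeta in EF. fold m in EF.
    assert (E4 : 4 ^ S j = 2 ^ (2 * j + 2)).
    { replace 4 with (2 ^ 2) by ring. rewrite <- pow_mult. f_equal. lia. }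
    rewrite E4.
    assert (Hsp : 0 < sqrt PI) by (apply sqrt_lt_R0; lra).
    assert (Hhj := hh_pos j). assert (Hhs := hh_pos (S j)).
    assert (Hfj : 0 < INR (fact j)) by (apply lt_0_INR, lt_O_fact).
    assert (Hfs : INR (fact (S j)) = INR (S j) * INR (fact j)) by (rewrite fact_simpl, mult_INR; auto).
    assert (Hs2 : 0 < sqrt 2) by (apply sqrt_lt_R0; lra).
    assert (Hse : 0 < sqrt (exp 1)) by (apply sqrt_lt_R0; lra).
    assert (Hpj : 0 < PI ^ j) by (apply pow_lt; lra).
    assert (H2j : 0 < 2 ^ (2 * j + 2)) by (apply pow_lt; lra).
    apply Rle_ge.
    apply Rle_trans with (Q * ((PI * exp 1 / m) ^ S j * sqrt (PI * exp 1 / m) * 3 /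
         (2 * sqrt 2 * (exp 1 ^ 2 * sqrt (exp 1)) * (2 * INR (S j))))).
    { right. field. repeat split; lra. }
    apply Rle_trans with (Q * (PI ^ j * INR (fact (S j)) / (2 * INR (S j) * (2 * INR (S j) + 1) * hh (S j) ^ 2))).
    { apply Rmult_le_compat_l; lra. }
    right. rewrite Hfs, <- !tech_pow_Rmult.
    field. repeat split; try lra.
Qed.
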